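(* Let $n \geq 1$, $r \geq 1$, $k \geq 0$ be integers, and suppose that either (1) $n \geq 3r^2 + 100$, $r \geq 2$, and $k \leq 4r$; or (2) $k \leq \frac{n}{\ln(n+1) + 1} - r$. Then \[E_r(n,k) \geq 0.6 \binom{k+r-1}{r-1}(k+r)^n.\]
   Context: The $r$th order Eulerian number $E_r(n,k)$ is the number of pairs $(w, S)$ with $w$ a permutation of $\{1, \ldots, n\}$ and $S \subset \{1, \ldots, n-1\}$ of size $r-1$ such that exactly $k$ indices $i \in \{1,\ldots,n-1\} \setminus S$ satisfy $w(i) > w(i+1)$. *)

(* Defs.v *)
From mathcomp Require Import all_boot all_order all_fingroup.
From Stdlib Require Import Reals.
Set Implicit Arguments. Unset Strict Implicit. Unset Printing Implicit Defensive.

(* 0-based encoding: positions 1..n of the paper are 0..n-1 ('I_n);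
   the adjacent-pair index i in {1,...,n-1} of the paper is j = i-1 : 'I_n.-1,
   comparing positions j and j+1. *)

Definition wseq (n : nat) (w : 'S_n) : seq nat := [seq nat_of_ord (w i) | i <- enum 'I_n].

Definition descent_at (n : nat) (w : 'S_n) (j : nat) : bool :=
  (j.+1 < n) && (nth 0 (wseq w) j > nth 0 (wseq w) j.+1).

Definition des_off (n : nat) (w : 'S_n) (S : {set 'I_n.-1}) : nat :=
  #|[set j : 'I_n.-1 | (j \notin S) && descent_at w j]|.

Definition eulerian_r (r n k : nat) : nat :=
  #|[set p : 'S_n * {set 'I_n.-1} |
      (#|p.2| == r.-1) && (des_off p.1 p.2 == k)]|.

(* Main.v *)
Require Import Defs.
From mathcomp Require Import all_boot all_order all_fingroup.
From Stdlib Require Import Reals.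
From mathcomp Require Import zify.
From Stdlib Require Import Lra Lia.
Set Implicit Arguments. Unset Strict Implicit. Unset Printing Implicit Defensive.
Open Scope nat_scope.

Lemma card_img a b (A : {set 'I_a}) (g : nat -> nat) :
  (forall x y : 'I_a, g x = g y -> x = y) -> (forall x : 'I_a, g x < b) ->
  #|[set i : 'I_b | [exists j in A, (i : nat) == g j]]| = #|A|.
Proof.
move=> ginj gb.
pose h (x : 'I_a) : 'I_b := Ordinal (gb x).
have -> : [set i : 'I_b | [exists j in A, (i : nat) == g j]] = h @: A.
  apply/setP => i; rewrite inE; apply/existsP/imsetP.
    by case=> j /andP [jA /eqP ij]; exists j => //; apply: val_inj.
  by case=> j jA ->; exists j; rewrite jA /=.
rewrite card_imset //.
by move=> x y /(congr1 val) /= /ginj.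
Qed.

Lemma card_lt_ord a c : c <= a -> #|[set j : 'I_a | j < c]| = c.
Proof.
move=> ca.
have -> : [set j : 'I_a | j < c] = [set i : 'I_a | [exists j in [set: 'I_c], (i : nat) == (fun x : nat => x) (nat_of_ord j)]].
  apply/setP => i; rewrite !inE; apply/idP/idP.
    move=> ic; apply/existsP; exists (Ordinal ic); by rewrite inE /=.
  by case/existsP=> j /andP [_ /eqP ->]; apply: ltn_ord.
rewrite (@card_img c a [set: _] (fun x : nat => x)) ?cardsT ?card_ord //.
  by move=> x y; apply: val_inj.
by move=> x; apply: leq_trans (ltn_ord x) ca.
Qed.

Lemma nth_wseq n (w : 'S_n) i (hi : i < n) :
  nth 0 (wseq w) i = w (Ordinal hi).
Proof.
rewrite /wseq (nth_map (Ordinal hi)); last by rewrite size_enum_ord.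
congr (nat_of_ord (w _)); apply: val_inj => /=; exact: nth_enum_ord.
Qed.

Section Sort.
Variables (n m : nat) (f : {ffun 'I_n -> 'I_m}).

Definition lexlt (p q : 'I_n) : bool :=
  ((f p : nat) < f q) || (((f p : nat) == f q) && ((p : nat) < q)).

Definition rk (p : 'I_n) : nat := #|[set q | lexlt q p]|.

Lemma rk_mono p q : lexlt p q -> rk p < rk q.
Proof.
move=> pq; apply: proper_card; apply/properP; split.
  apply/subsetP => x; rewrite !inE /lexlt; move: pq; rewrite /lexlt; lia.
exists p; rewrite !inE //= /lexlt; lia.
Qed.

Lemma rk_lt p : rk p < n.
Proof.
rewrite -[X in _ < X](card_ord n) -cardsT; apply: proper_card; apply/properP; split.
  by apply/subsetP => x; rewrite inE.
by exists p; rewrite !inE /lexlt //=; lia.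
Qed.

Lemma lexlt_total p q : p != q -> lexlt p q || lexlt q p.
Proof.
move=> /eqP pq.
have : (p : nat) <> q by move=> h; apply: pq; apply: val_inj.
rewrite /lexlt; lia.
Qed.

Lemma rk_inj : injective rk.
Proof.
move=> p q e; apply/eqP; apply/negPn/negP => /lexlt_total /orP [] /rk_mono; lia.
Qed.

Lemma rk_ltE p q : (rk p < rk q) = lexlt p q.
Proof.
apply/idP/idP; last exact: rk_mono.
move=> h; case: (eqVneq p q) => [e|ne]; first by move: h; rewrite e ltnn.
case/orP: (lexlt_total ne) => // /rk_mono; lia.
Qed.

Definition rko p : 'I_n := Ordinal (rk_lt p).
Lemma rko_inj : injective rko.
Proof. by move=> p q /(congr1 val) /= /rk_inj. Qed.

Definition sig_f : 'S_n := perm rko_inj.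
Definition w_f : 'S_n := sig_f^-1.

Lemma rk_w (i : 'I_n) : rk (w_f i) = i.
Proof.
have /(congr1 val) e := permKV sig_f i.
by rewrite /sig_f permE /= in e.
Qed.

Definition cnt (j : nat) : nat := #|[set q | (f q : nat) <= j]|.

Lemma rk_cnt p j : (rk p < cnt j) = ((f p : nat) <= j).
Proof.
apply/idP/idP => h.
  apply/negPn/negP; rewrite -ltnNge => lt.
  suff : cnt j <= rk p by lia.
  apply: subset_leq_card; apply/subsetP => x; rewrite !inE /lexlt; lia.
apply: proper_card; apply/properP; split.
  apply/subsetP => x; rewrite !inE /lexlt; lia.
by exists p; rewrite !inE /lexlt //=; lia.
Qed.

Lemma cnt_le j : cnt j <= n.
Proof. by rewrite -[X in _ <= X](card_ord n); apply: max_card. Qed.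

Lemma cnt_last : cnt m.-1 = n.
Proof.
rewrite /cnt -[RHS](card_ord n) -cardsT; apply: eq_card => x; rewrite !inE.
have := ltn_ord (f x); lia.
Qed.

Definition goodb : bool :=
  all (fun j => ~~ ((j.+1 < m) && ~~ [exists p : 'I_n, exists q : 'I_n,
     (p < q) && ((f p : nat) == j.+1) && ((f q : nat) == j)])) (iota 0 m).

Lemma goodP : goodb -> forall j, j.+1 < m ->
  exists p q : 'I_n, p < q /\ (f p : nat) = j.+1 /\ (f q : nat) = j.
Proof.
move=> /allP g j jm.
have := g j; rewrite mem_iota /= add0n.
have -> : j < m by lia.
rewrite jm /= negbK => /(_ isT) /existsP [p /existsP [q /andP [/andP [pq /eqP e1] /eqP e2]]].
by exists p, q.
Qed.

Definition bd (j : nat) : nat := (cnt j).-1.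

Lemma desc_iff (i : nat) (hi : i.+1 < n) : goodb ->
  descent_at w_f i = [exists j : 'I_m.-1, i == bd j].
Proof.
move=> gd.
have hi0 : i < n by lia.
rewrite /descent_at hi /= (nth_wseq _ hi0) (nth_wseq _ hi).
set p := w_f (Ordinal hi0); set q := w_f (Ordinal hi).
have rp : rk p = i by rewrite /p rk_w.
have rq : rk q = i.+1 by rewrite /q rk_w.
apply/idP/existsP.
  move=> qp.
  have lpq : lexlt p q by rewrite -rk_ltE rp rq.
  have fpq : (f p : nat) < f q by move: lpq; rewrite /lexlt; lia.
  have c1 : i < cnt (f p) by rewrite -rp rk_cnt.
  have c2 : ~~ (i.+1 < cnt (f p)) by rewrite -rq rk_cnt; lia.
  have fpm : (f p : nat) < m.-1.
    have := ltn_ord (f p) => fm.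
    apply/negPn/negP => h.
    have e : (f p : nat) = m.-1 by lia.
    by move: c2; rewrite e cnt_last; lia.
  by exists (Ordinal fpm); rewrite /bd /=; lia.
case=> j /eqP ij.
have jm : j.+1 < m by have := ltn_ord j; lia.
have [a [b [ab [fa fb]]]] := goodP gd jm.
have rb : rk b < cnt j by rewrite rk_cnt fb.
have ra : ~~ (rk a < cnt j) by rewrite rk_cnt fa; lia.
have fp : (f p : nat) <= j by rewrite -rk_cnt rp; move: rb; rewrite /bd in ij; lia.
have fq : ~~ ((f q : nat) <= j) by rewrite -rk_cnt rq; move: rb; rewrite /bd in ij; lia.
have bp : (b : nat) <= p.
  case: (eqVneq b p) => [->//|ne].
  have : rk b < rk p.
    have : rk b != rk p by apply/eqP => /rk_inj /eqP; rewrite (negbTE ne).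
    move: rb; rewrite rp /bd in ij *; lia.
  rewrite rk_ltE /lexlt; lia.
have qa : (q : nat) <= a.
  case: (eqVneq q a) => [->//|ne].
  have : rk q < rk a.
    have : rk q != rk a by apply/eqP => /rk_inj /eqP; rewrite (negbTE ne).
    move: ra; rewrite rq /bd in ij *; lia.
  rewrite rk_ltE /lexlt; lia.
lia.
Qed.


Lemma cnt_lt j j' : goodb -> j < j' -> j' < m -> cnt j < cnt j'.
Proof.
move=> gd jj jm.
have [a [b [ab [fa fb]]]] := goodP gd (leq_ltn_trans jj jm).
apply: proper_card; apply/properP; split.
  apply/subsetP => x; rewrite !inE; lia.
by exists a; rewrite !inE fa; lia.
Qed.

Lemma cnt_pos j : goodb -> j.+1 < m -> 0 < cnt j.
Proof.
move=> gd jm; have [a [b [ab [fa fb]]]] := goodP gd jm.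
by apply/card_gt0P; exists b; rewrite inE fb.
Qed.

Lemma bd_inj : goodb -> forall j j' : 'I_m.-1, bd j = bd j' -> j = j'.
Proof.
move=> gd j j' e; apply: val_inj => /=.
have hj := ltn_ord j; have hj' := ltn_ord j'.
have p1 := cnt_pos gd (j := j) ltac:(lia).
have p2 := cnt_pos gd (j := j') ltac:(lia).
case: (ltngtP j j') => // h.
  have := cnt_lt gd h ltac:(lia); move: e; rewrite /bd; lia.
have := cnt_lt gd h ltac:(lia); move: e; rewrite /bd; lia.
Qed.

Lemma bd_lt : goodb -> forall j : 'I_m.-1, bd j < n.-1.
Proof.
move=> gd j; have hj := ltn_ord j.
have p1 := cnt_pos gd (j := j) ltac:(lia).
have := cnt_lt gd (j := j) (j' := j.+1) (ltnSn _) ltac:(lia).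
have := cnt_le j.+1; rewrite /bd; lia.
Qed.

Definition S_f (T : {set 'I_m.-1}) : {set 'I_n.-1} :=
  [set i : 'I_n.-1 | [exists j in ~: T, (i : nat) == bd j]].

Lemma card_S T : goodb -> #|S_f T| = #|~: T|.
Proof. by move=> gd; rewrite card_img //; [exact: bd_inj | exact: bd_lt]. Qed.

Lemma desc_iff' (i : 'I_n.-1) : goodb ->
  descent_at w_f i = [exists j : 'I_m.-1, (i : nat) == bd j].
Proof. by move=> gd; apply: desc_iff => //; have := ltn_ord i; lia. Qed.

Lemma desoff T : goodb -> des_off w_f (S_f T) = #|T|.
Proof.
move=> gd; rewrite /des_off.
have -> : [set j : 'I_n.-1 | (j \notin S_f T) && descent_at w_f j] =
          [set i : 'I_n.-1 | [exists j in T, (i : nat) == bd j]].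
  apply/setP => i; rewrite !inE desc_iff' //; apply/idP/idP.
    case/andP => h /existsP [j e]; apply/existsP; exists j; rewrite e andbT.
    apply/negPn/negP => jT; move/negP: h; apply; apply/existsP; exists j.
    by rewrite inE jT.
  case/existsP => j /andP [jT e]; apply/andP; split; last by apply/existsP; exists j.
  apply/negP => /existsP [j' /andP [j'T e']].
  have ejj : j = j' by apply: (bd_inj gd); rewrite -(eqP e) -(eqP e').
  by move: j'T; rewrite inE -ejj jT.
by rewrite card_img //; [exact: bd_inj | exact: bd_lt].
Qed.

Lemma f_rec p : goodb ->
  (f p : nat) = #|[set i : 'I_n.-1 | descent_at w_f i && (i < rk p)]|.
Proof.
move=> gd.
have -> : [set i : 'I_n.-1 | descent_at w_f i && (i < rk p)] =
    [set i : 'I_n.-1 | [exists j in [set j : 'I_m.-1 | bd j < rk p], (i : nat) == bd j]].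
  apply/setP => i; rewrite !inE desc_iff'//; apply/idP/idP.
    case/andP => /existsP [j e] h; apply/existsP; exists j; rewrite e inE andbT.
    by rewrite -(eqP e).
  case/existsP => j /andP [h e]; rewrite inE in h; rewrite (eqP e) h andbT.
  by apply/existsP; exists j.
rewrite card_img //; [|exact: bd_inj | exact: bd_lt].
have -> : [set j : 'I_m.-1 | bd j < rk p] = [set j : 'I_m.-1 | j < f p].
  apply/setP => j; rewrite !inE.
  have hj := ltn_ord j.
  have p1 := cnt_pos gd (j := j) ltac:(lia).
  have e := rk_cnt p j; rewrite /bd; lia.

by rewrite card_lt_ord //; have := ltn_ord (f p); lia.
Qed.

End Sort.

Lemma phi_inj n m (f1 f2 : {ffun 'I_n -> 'I_m}) (T1 T2 : {set 'I_m.-1}) :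
  goodb f1 -> goodb f2 -> w_f f1 = w_f f2 -> S_f f1 T1 = S_f f2 T2 ->
  f1 = f2 /\ T1 = T2.
Proof.
move=> g1 g2 ew eS.
have es : sig_f f1 = sig_f f2 by rewrite -[sig_f f1]invgK -[sig_f f2]invgK; congr (_^-1)%g.
have er : forall p, rk f1 p = rk f2 p.
  move=> p; have := congr1 (fun s : 'S_n => val (s p)) es.
  by rewrite /sig_f !permE.
have ef : f1 = f2.
  apply/ffunP => p; apply: ord_inj.
  by rewrite (f_rec p g1) (f_rec p g2) ew er.
split => //; subst f2.
apply/setP => j.
have h : forall T : {set 'I_m.-1}, (j \in T) = ~~ (Ordinal (bd_lt g1 j) \in S_f f1 T).
  move=> T; rewrite inE; apply/idP/idP.
    move=> jT; apply/negP => /existsP [j' /andP [j'T e]].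
    have ejj : j = j' by apply: (bd_inj g1); exact: (eqP e).
    by move: j'T; rewrite inE -ejj jT.
  move=> h; apply/negPn/negP => jT; move/negP: h; apply; apply/existsP; exists j.
  by rewrite inE jT eqxx.
by rewrite !h eS.
Qed.

Lemma eul_lb n k r : 0 < r ->
  #|[set f : {ffun 'I_n -> 'I_(k + r)} | goodb f]| * 'C((k + r).-1, k) <= eulerian_r r n k.
Proof.
move=> r0.
pose Dom := [set x : {ffun 'I_n -> 'I_(k + r)} * {set 'I_(k + r).-1} | goodb x.1 && (#|x.2| == k)].
have cD : #|Dom| = #|[set f : {ffun 'I_n -> 'I_(k + r)} | goodb f]| * 'C((k + r).-1, k).
  have -> : Dom = setX [set f : {ffun 'I_n -> 'I_(k + r)} | goodb f] [set T : {set 'I_(k + r).-1} | #|T| == k].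
    by apply/setP => [[f T]]; rewrite !inE.
  by rewrite cardsX card_draws card_ord.
pose Phi (x : {ffun 'I_n -> 'I_(k + r)} * {set 'I_(k + r).-1}) := (w_f x.1, S_f x.1 x.2).
rewrite -cD -(@card_in_imset _ _ Phi).
  rewrite /eulerian_r; apply: subset_leq_card; apply/subsetP => y.
  case/imsetP => [[f T]]; rewrite inE /= => /andP [gf /eqP cT] -> /=.
  rewrite inE /= card_S // desoff // cT eqxx andbT.
  have := cardsC T; rewrite card_ord cT => e.
  apply/eqP; lia.
move=> [f1 T1] [f2 T2]; rewrite !inE /= => /andP [g1 _] /andP [g2 _] [e1 e2].
by have [-> ->] := phi_inj g1 g2 e1 e2.
Qed.

Section Count.
Variables (n m' : nat).
Local Notation m := m'.+2.
Implicit Type f : {ffun 'I_n -> 'I_m}.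

Definition badb (f : {ffun 'I_n -> 'I_m}) (j : nat) : bool :=
  (j.+1 < m) && ~~ [exists p : 'I_n, exists q : 'I_n,
     (p < q) && ((f p : nat) == j.+1) && ((f q : nat) == j)].

Lemma goodb_has f : goodb f = ~~ has (badb f) (iota 0 m).
Proof. by rewrite -all_predC. Qed.

Definition jb f := find (badb f) (iota 0 m).

Lemma jb_spec f : ~~ goodb f ->
  [/\ jb f < m, badb f (jb f) & forall i, i < jb f -> ~~ badb f i].
Proof.
rewrite goodb_has negbK => h.
have hs := h; rewrite has_find size_iota in hs.
split => //.
  by have := nth_find 0 h; rewrite nth_iota // add0n.
move=> i ij; have := before_find 0 ij; rewrite nth_iota ?add0n ?ij //.
  by move=> ->.
exact: ltn_trans ij hs.
Qed.

Definition cmp (j v : nat) := if v <= j then v else v.-1.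

Definition lastp f (p : 'I_n) : bool :=
  ((f p : nat) == jb f) && [forall q : 'I_n, ((f q : nat) == jb f) ==> (q <= p)].

Definition psi (f : {ffun 'I_n -> 'I_m}) : option 'I_n * {ffun 'I_n -> 'I_m'.+1} :=
  ([pick p | lastp f p], [ffun p => inord (cmp (jb f) (f p))]).

Lemma cmp_lt f p : ~~ goodb f -> cmp (jb f) (f p) < m'.+1.
Proof.
case/jb_spec => jm /andP [jm1 _] _; have := ltn_ord (f p); rewrite /cmp.
case: (leqP (f p) (jb f)); lia.
Qed.

Lemma has_last f p0 : (f p0 : nat) = jb f -> exists s, lastp f s.
Proof.
move=> e.
pose P := (fun p : 'I_n => (f p : nat) == jb f).
have P0 : P p0 by rewrite /P /= e.
case: (@arg_maxnP _ p0 P (fun p : 'I_n => nat_of_ord p) P0) => s Ps Hs.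
exists s; rewrite /lastp; apply/andP; split; first exact: Ps.
apply/forallP => q; apply/implyP => Pq; exact: Hs.
Qed.

Lemma none_j0 f : ~~ goodb f -> (forall p, ~~ lastp f p) ->
  jb f = 0 /\ forall p, (f p : nat) != 0.
Proof.
move=> bf nl.
have nj : forall p, (f p : nat) != jb f.
  by move=> p; apply/eqP => e; have [s ls] := has_last e; move: (nl s); rewrite ls.
have [jm bj bef] := jb_spec bf.
suff j0 : jb f = 0 by split => // p; rewrite -j0.
apply/eqP; apply/negPn/negP => jn0.
have := bef (jb f).-1 ltac:(lia); rewrite /badb negb_and negbK.
have -> : (jb f).-1.+1 < m by lia.
move=> /= /existsP [p /existsP [q /andP [/andP [_ /eqP e] _]]].
by move: (nj p); rewrite e; lia.
Qed.

Lemma psi_inj : {in [set f | ~~ goodb f] &, injective psi}.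
Proof.
move=> f1 f2; rewrite !inE => b1 b2 [ep eg].
have eg' : forall p, cmp (jb f1) (f1 p) = cmp (jb f2) (f2 p).
  move=> p; have := congr1 (fun g : {ffun 'I_n -> 'I_m'.+1} => nat_of_ord (g p)) eg.
  by rewrite !ffunE !inordK //; apply: cmp_lt.
apply/ffunP => p; apply: ord_inj.
case: pickP ep => [s ls1|nl1].
  case: pickP => [s' ls2 [ess]|]; last by [].
  subst s'.
  move: ls1 ls2; rewrite /lastp => /andP [/eqP fs1 /forallP l1] /andP [/eqP fs2 /forallP l2].
  have ejj : jb f1 = jb f2.
    by have := eg' s; rewrite fs1 fs2 /cmp !leqnn.
  have [_ /andP [jm1 nb1] _] := jb_spec b1.
  have [_ /andP [jm2 nb2] _] := jb_spec b2.
  have pos : forall (f : {ffun 'I_n -> 'I_m}), (f s : nat) = jb f ->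
      ~~ [exists p : 'I_n, exists q : 'I_n, (p < q) && ((f p : nat) == (jb f).+1) && ((f q : nat) == jb f)] ->
      (f p : nat) = (jb f).+1 -> (s : nat) < p.
    move=> f fs nb fp; rewrite ltnNge; apply/negP => ps.
    case: (eqVneq p s) => [eps|nps]; first by move: fp; rewrite eps fs; lia.
    have ps' : (p : nat) < s.
      have : (p : nat) != s by exact: nps.

      lia.
    move/negP: nb; apply; apply/existsP; exists p; apply/existsP; exists s.
    by rewrite ps' fp fs !eqxx.
  have l1' : (f1 p : nat) = jb f1 -> (p : nat) <= s by move=> h; have := l1 p; rewrite h eqxx.
  have l2' : (f2 p : nat) = jb f2 -> (p : nat) <= s by move=> h; have := l2 p; rewrite h eqxx.
  have p1 := pos f1 fs1 nb1; have p2 := pos f2 fs2 nb2.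
  have := eg' p; rewrite /cmp -ejj in p2 l2' *.
  case: (leqP (f1 p) (jb f1)); case: (leqP (f2 p) (jb f1)) => h2 h1 e.
  - by [].
  - case: (eqVneq (f2 p : nat) (jb f1).+1) => [e2|ne2]; last lia.
    have := p2 e2; have := l1' ltac:(lia); lia.
  - case: (eqVneq (f1 p : nat) (jb f1).+1) => [e1|ne1]; last lia.
    have := p1 e1; have := l2' ltac:(lia); lia.
  - clear -e h1 h2; move: e h1 h2; set a := nat_of_ord _; set b := nat_of_ord _; set c := jb _; move=> e h1 h2; lia.
case: pickP => [s' _|nl2 _]; first by [].
have [j1 n1] := none_j0 b1 (fun p => negbT (nl1 p)).
have [j2 n2] := none_j0 b2 (fun p => negbT (nl2 p)).
have := eg' p; rewrite j1 j2 /cmp; have := n1 p; have := n2 p.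
move: (nat_of_ord (f1 p)) (nat_of_ord (f2 p)) => a b.
case: (leqP a 0); case: (leqP b 0); lia.
Qed.

Lemma bad_count :
  #|[set f : {ffun 'I_n -> 'I_m} | ~~ goodb f]| <= n.+1 * expn m'.+1 n.
Proof.
rewrite -(card_in_imset psi_inj).
have := max_card (mem (psi @: [set f : {ffun 'I_n -> 'I_m} | ~~ goodb f])).
by rewrite card_prod card_option card_ffun !card_ord.
Qed.

End Count.

Lemma good_count n m : 0 < n -> 0 < m ->
  expn m n <= #|[set f : {ffun 'I_n -> 'I_m} | goodb f]| + n.+1 * expn m.-1 n.
Proof.
move=> n0 m0.
have tot : #|[set f : {ffun 'I_n -> 'I_m} | goodb f]| + #|[set f : {ffun 'I_n -> 'I_m} | ~~ goodb f]| = expn m n.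
  rewrite -[RHS](_ : #|{ffun 'I_n -> 'I_m}| = expn m n); last by rewrite card_ffun !card_ord.
  rewrite -(cardsC [set f : {ffun 'I_n -> 'I_m} | goodb f]).
  by congr (_ + _); apply: eq_card => f; rewrite !inE.
case: m m0 tot => [//|[|m']] _ tot.
  have : #|[set f : {ffun 'I_n -> 'I_1} | ~~ goodb f]| = 0.
    by apply: eq_card0 => f; rewrite inE /goodb /=.
  lia.
have := bad_count n m'; move: tot; set B := #|_|; set G := #|_|; rewrite -[m'.+2.-1]/(m'.+1); lia.
Qed.

Open Scope R_scope.
Unset Implicit Arguments.
Lemma exp_ge_pow (k : nat) : forall x, 0 <= x -> (1 + x / 2 ^ k) ^ (Nat.pow 2 k) <= exp x.
Proof.
induction k as [|k IH] => x hx.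
  rewrite /= Rdiv_1_r Rmult_1_r; apply: exp_ineq1_le.
have e1 : Nat.pow 2 k.+1 = (Nat.pow 2 k * 2)%nat by simpl; lia.
have e2 : x / 2 ^ k.+1 = (x / 2) / 2 ^ k by rewrite /= Rdiv_mult_distr.
rewrite e1 e2 pow_mult.
have -> : exp x = exp (x / 2) ^ 2 by rewrite /= Rmult_1_r -exp_plus; congr exp; lra.
apply: pow_incr; split; last by apply: IH; lra.
apply: pow_le; have := pow_lt 2 k; have : 0 <= x / 2 / 2 ^ k.
  apply: Rmult_le_pos; [lra | left; apply: Rinv_0_lt_compat; apply: pow_lt; lra].
lra.
Qed.

Lemma sq_step b b' y : 0 <= b -> b <= y -> b' <= b * b -> b' <= y ^ 2.
Proof. move=> h0 h1 h2; have : b * b <= y * y by apply: Rmult_le_compat. simpl; lra. Qed.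

Lemma pow128 a : a ^ 128 = (((((((a ^ 2) ^ 2) ^ 2) ^ 2) ^ 2) ^ 2) ^ 2).
Proof. by rewrite -!pow_mult. Qed.

Lemma exp692 : 840 <= exp 6.92.
Proof.
have h := exp_ge_pow 7 6.92 ltac:(lra).
have e : Nat.pow 2 7 = 128%nat by [].
rewrite e pow128 in h.
have a0 : 1 + 6.92 / 2 ^ 7 = 1.0540625 by simpl; lra.
rewrite a0 in h.
apply: Rle_trans h.
apply: (@sq_step 29.05921); [lra| |lra].
apply: (@sq_step 5.39066); [lra| |lra].
apply: (@sq_step 2.32178); [lra| |lra].
apply: (@sq_step 1.52374); [lra| |lra].
apply: (@sq_step 1.2344); [lra| |lra].
apply: (@sq_step 1.11104); [lra| |lra].
apply: (@sq_step 1.0540625); lra.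
Qed.
Lemma exp75 : 1003 <= exp 7.5.
Proof.
have h := exp_ge_pow 7 7.5 ltac:(lra).
have e : Nat.pow 2 7 = 128%nat by [].
rewrite e pow128 in h.
have a0 : 1 + 7.5 / 2 ^ 7 = 1.05859375 by simpl; lra.
rewrite a0 in h.
apply: Rle_trans h.
apply: (@sq_step 38.24766); [lra| |lra].
apply: (@sq_step 6.18447); [lra| |lra].
apply: (@sq_step 2.48686); [lra| |lra].
apply: (@sq_step 1.57698); [lra| |lra].
apply: (@sq_step 1.25578); [lra| |lra].
apply: (@sq_step 1.12062); [lra| |lra].
apply: (@sq_step 1.05859375); lra.
Qed.
Lemma exp8 : 2000 <= exp 8.
Proof.
have h := exp_ge_pow 7 8 ltac:(lra).
have e : Nat.pow 2 7 = 128%nat by [].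
rewrite e pow128 in h.
have a0 : 1 + 8 / 2 ^ 7 = 1.0625 by simpl; lra.
rewrite a0 in h.
apply: Rle_trans h.
apply: (@sq_step 48.41056); [lra| |lra].
apply: (@sq_step 6.95777); [lra| |lra].
apply: (@sq_step 2.63776); [lra| |lra].
apply: (@sq_step 1.62412); [lra| |lra].
apply: (@sq_step 1.27441); [lra| |lra].
apply: (@sq_step 1.1289); [lra| |lra].
apply: (@sq_step 1.0625); lra.
Qed.

Lemma exp_pow_nat x n : exp x ^ n = exp (INR n * x).
Proof.
elim: n => [|n IH]; first by rewrite /= Rmult_0_l exp_0.
have -> : exp x ^ n.+1 = exp x * exp x ^ n by [].
by rewrite IH -exp_plus S_INR; congr exp; ring.
Qed.

Lemma exp_mono x y : x <= y -> exp x <= exp y.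
Proof. case=> [h|->]; [left; exact: exp_increasing | lra]. Qed.
Arguments exp_mono {x y}.

Lemma e_ge : 2.5 <= exp 1.
Proof.
have h := exp_ge_pow 3 1 ltac:(lra).
have a0 : 1 + 1 / 2 ^ 3 = 1.125 by simpl; lra.
rewrite a0 in h; simpl in h; lra.
Qed.

Lemma keyX (N M : R) : 2 <= M -> 0 <= N ->
  (M * (ln (N + 1) + 1) <= N \/ 3 * M ^ 2 + 2500 <= 25 * N) ->
  2.5 * (N + 1) <= exp (N / M).
Proof.
move=> hM hN [c2|c1].
  have hX : ln (N + 1) + 1 <= N / M.
    have -> : ln (N + 1) + 1 = (M * (ln (N + 1) + 1)) / M by field; lra.
    apply: Rmult_le_compat_r => //; left; apply: Rinv_0_lt_compat; lra.
  apply: (Rle_trans _ _ _ _ (exp_mono hX)).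
  rewrite exp_plus exp_ln; last lra.
  have := e_ge; nra.
set X := N / M.
have hN' : N = X * M by rewrite /X; field; lra.
rewrite hN' in c1 *.
have q1 : 0 < 3 * M ^ 2 - 173 * M + 2500.
  have := pow2_ge_0 (M - 173 / 6); nra.
have X0 : 6.92 <= X by nra.
case: (Rle_or_lt 8 X) => h8.
  have e1 : exp X = exp 8 * exp (X - 8) by rewrite -exp_plus; congr exp; ring.
  have h2 := exp_ge_pow 1 (X - 8) ltac:(lra).
  have a0 : (1 + (X - 8) / 2 ^ 1) ^ Nat.pow 2 1 = (1 + (X - 8) / 2) ^ 2 by rewrite pow_1.
  rewrite a0 in h2.
  have h3 : 3 * M <= 25 * X by nra.
  have := exp8.
  rewrite e1.
  have hsq : 0 <= (1 + (X - 8) / 2) ^ 2 by apply: pow2_ge_0.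
  nra.
case: (Rle_or_lt 7.5 X) => h75.
  have hm : M < 50.
    apply: Rnot_le_lt => hm.
    have : 0 <= (M - 50) * (3 * M - 50) by apply: Rmult_le_pos; lra.
    nra.
  have := exp_mono h75; have := exp75; nra.
have hm : M < 43.3.
  apply: Rnot_le_lt => hm.
  have : 0 <= (M - 43.3) * (3 * M - 57.6) by apply: Rmult_le_pos; lra.
  nra.
have := exp_mono X0; have := exp692; nra.
Qed.

Lemma key2 (n : nat) (M : R) : 2 <= M ->
  (M * (ln (INR n + 1) + 1) <= INR n \/ 3 * M ^ 2 + 2500 <= 25 * INR n) ->
  (INR n + 1) * (M - 1) ^ n <= 4 / 10 * M ^ n.
Proof.
move=> hM hc.
have hN := pos_INR n.
have hX := keyX _ _ hM hN hc.
set X := INR n / M in hX.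
have h1 : M - 1 <= M * exp (- (1 / M)).
  have := exp_ineq1_le (- (1 / M)).
  have -> : M - 1 = M * (1 + - (1 / M)) by field; lra.
  move=> h; apply: Rmult_le_compat_l => //; lra.
have h2 : (M - 1) ^ n <= (M * exp (- (1 / M))) ^ n by apply: pow_incr; lra.
rewrite Rpow_mult_distr exp_pow_nat in h2.
have h3 : exp (INR n * - (1 / M)) = / exp X.
  rewrite -exp_Ropp; congr exp; rewrite /X; field; lra.
rewrite h3 in h2.
have E0 : 0 < exp X := exp_pos X.
have P0 : 0 < M ^ n by apply: pow_lt; lra.
have I0 : 0 < / exp X by apply: Rinv_0_lt_compat.
have EI : exp X * / exp X = 1 by field; lra.
have h4 : (INR n + 1) * / exp X <= 4 / 10 by nra.
have h5 : (INR n + 1) * (M - 1) ^ n <= (INR n + 1) * (M ^ n * / exp X)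
  by apply: Rmult_le_compat_l => //; lra.
nra.
Qed.

Lemma INR_expn a b : INR (expn a b) = INR a ^ b.
Proof.
elim: b => [|b IH]; first by rewrite expn0.
by rewrite expnS mult_INR IH.
Qed.

Theorem lemma2p8 (n r k : nat) :
  (1 <= n)%nat -> (1 <= r)%nat ->
  ( (INR n >= 3 * INR r ^ 2 + 100 /\ (2 <= r)%nat /\ (k <= 4 * r)%nat)
    \/ INR k <= INR n / (ln (INR n + 1) + 1) - INR r ) ->
  INR (eulerian_r r n k) >= (6 / 10) * INR 'C(k + r - 1, r - 1) * INR (k + r) ^ n.
Proof.
move=> n1 r1 hc.
have m1 : (1 <= k + r)%nat by lia.
have hE := eul_lb n k r1.
have hG := good_count n1 m1.
move: hE hG.
set G := #|_|.
move=> hE hG.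
have hC : 'C(k + r - 1, r - 1) = 'C((k + r).-1, k).
  rewrite -bin_sub; last by lia.
  by congr 'C(_, _); lia.
rewrite hC.
have hE' : INR G * INR 'C((k + r).-1, k) <= INR (eulerian_r r n k).
  by rewrite -mult_INR; apply/le_INR/leP.
have hG' : INR (k + r) ^ n <= INR G + (INR n + 1) * INR (k + r).-1 ^ n.
  rewrite -!INR_expn -S_INR -mult_INR -plus_INR; apply/le_INR/leP; exact: hG.
have key : (INR n + 1) * INR (k + r).-1 ^ n <= 4 / 10 * INR (k + r) ^ n.
  case: (leqP (k + r) 1) => hm.
    have -> : (k + r).-1 = 0%nat by lia.
    have -> : (INR 0 ^ n = 0) by rewrite /= pow_i; [| lia].
    rewrite Rmult_0_r; apply: Rmult_le_pos; first lra.
    apply: pow_le; exact: pos_INR.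
  have -> : INR (k + r).-1 = INR (k + r) - 1.
    have -> : (k + r).-1 = (k + r - 1)%coq_nat by lia.
    rewrite minus_INR //; apply/leP; lia.
  have hM : 2 <= INR (k + r) by rewrite plus_INR; have := le_INR 2 (k + r) ltac:(apply/leP; lia); rewrite plus_INR /=; lra.
  apply: key2 => //.
  have hN := pos_INR n.
  rewrite plus_INR in hM *.
  case: hc => [[c1 [c2 c3]]|c].
    right.
    have c3' : INR k <= 4 * INR r.
      have := le_INR k (4 * r) ltac:(apply/leP; exact: c3).
      by rewrite mult_INR /=; lra.
    have := pos_INR k; have := pos_INR r; nra.
  left.
  have L0 : 0 < ln (INR n + 1).
    rewrite -ln_1; apply: ln_increasing; first lra.
    have := le_INR 1 n ltac:(apply/leP; exact: n1); simpl; lra.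
  have : INR k + INR r <= INR n / (ln (INR n + 1) + 1) by lra.
  move=> h.
  set L := ln (INR n + 1) + 1 in h *.
  have eL : INR n / L * L = INR n by field; rewrite /L; lra.
  rewrite -[X in _ <= X]eL; apply: Rmult_le_compat_r; rewrite /L; lra.
have C0 := pos_INR 'C((k + r).-1, k).
apply: Rle_ge.
nra.
Qed.
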